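(* If $\gamma_*>0$ and $P[\mu_1,\mu_2]$ is a nonsingular matrix, then $\mathrm{rank}(\hat V(\gamma_* ))=2$, where $\hat V(\gamma_* )=[v_1(\gamma_* )\ \ v_2(\gamma_* )-\theta_*v_1(\gamma_* )]$ and $\theta_*=\frac{\gamma_*}{\mu_1-\mu_2}$.
   Context: Let $P(\lambda)=\sum_{j=0}^m A_j\lambda^j$ be an $n\times n$ matrix polynomial with $\det A_m\neq0$, let $\mu_1\neq\mu_2$ be complex numbers, $P[\mu_1,\mu_2]=\frac{P(\mu_1)-P(\mu_2)}{\mu_1-\mu_2}$, and $F[P(\mu_1,\mu_2);\gamma]=\begin{bmatrix} P(\mu_1) & 0\\ \gamma P[\mu_1,\mu_2] & P(\mu_2)\end{bmatrix}$. Let $\gamma_*$ be a point where $s_{2n-1}(F[P(\mu_1,\mu_2);\gamma])$ attains its maximum $s_*>0$ over $\gamma\ge0$. Let $\begin{bmatrix} u_1(\gamma_* )\\ u_2(\gamma_* )\end{bmatrix},\begin{bmatrix} v_1(\gamma_* )\\ v_2(\gamma_* )\end{bmatrix}$ ($u_k,v_k\in\mathbb{C}^n$) be a pair of left and right singular vectors of $s_*$ chosen such that $u_2(\gamma_* )^*P[\mu_1,\mu_2]v_1(\gamma_* )=0$, $u_2(\gamma_* )^*u_1(\gamma_* )=v_2(\gamma_* )^*v_1(\gamma_* )$, and $[u_1\ u_2]^*[u_1\ u_2]=[v_1\ v_2]^*[v_1\ v_2]$ at $\gamma_*$ (such a pair exists). *)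

(* Defs.v *)
From HB Require Import structures.
From mathcomp Require Import all_boot all_order all_algebra.
From mathcomp.real_closed Require Import complex.
From mathcomp Require Import reals.
Set Implicit Arguments. Unset Strict Implicit. Unset Printing Implicit Defensive.
Import Order.TTheory GRing.Theory Num.Theory.
Local Open Scope ring_scope.

Definition adjmx (C : numClosedFieldType) m n (A : 'M[C]_(m, n)) : 'M[C]_(n, m) :=
  (map_mx (@Num.conj C) A)^T.

Definition mxpoly_eval (C : numClosedFieldType) n m (A : 'I_m.+1 -> 'M[C]_n) (x : C)
  : 'M[C]_n := \sum_(j < m.+1) (x ^+ j) *: A j.

Definition mxpoly_dd (C : numClosedFieldType) n m (A : 'I_m.+1 -> 'M[C]_n) (mu1 mu2 : C)
  : 'M[C]_n := (mu1 - mu2)^-1 *: (mxpoly_eval A mu1 - mxpoly_eval A mu2).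

Definition Fmat (C : numClosedFieldType) n m (A : 'I_m.+1 -> 'M[C]_n) (mu1 mu2 g : C)
  : 'M[C]_(n + n) :=
  block_mx (mxpoly_eval A mu1) 0 (g *: mxpoly_dd A mu1 mu2) (mxpoly_eval A mu2).

(* sv_seq M s : s is the list of the singular values of M in nonincreasing
   order, counted with multiplicity, i.e. the nonnegative square roots of the
   eigenvalues (with algebraic multiplicity) of M^* M. *)
Definition sv_seq (C : numClosedFieldType) N (M : 'M[C]_N) (s : seq C) : Prop :=
  [/\ all (fun x => 0 <= x) s,
      sorted (fun x y => y <= x) s &
      char_poly (adjmx M *m M) = \prod_(x <- s) ('X - (x ^+ 2)%:P)].

(* is_sv M k x : x is the k-th largest singular value s_k(M) (1-based k). *)
Definition is_sv (C : numClosedFieldType) N (M : 'M[C]_N) (k : nat) (x : C) : Prop :=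
  exists s : seq C, [/\ sv_seq M s, (0 < k)%N, (k <= size s)%N & x = nth 0 s k.-1].

(* Main.v *)
Require Import Defs.
From HB Require Import structures.
From mathcomp Require Import all_boot all_order all_algebra.
From mathcomp.real_closed Require Import complex.
From mathcomp Require Import reals.
Import Order.TTheory GRing.Theory Num.Theory.
Local Open Scope ring_scope.
Section A.
Variable C : numClosedFieldType.
Lemma adjmxM m n p (A : 'M[C]_(m,n)) (B : 'M[C]_(n,p)) : adjmx (A *m B) = adjmx B *m adjmx A.
Proof. by rewrite /adjmx map_mxM trmx_mul. Qed.
Lemma adjmxD m n (A B : 'M[C]_(m,n)) : adjmx (A + B) = adjmx A + adjmx B.
Proof. by rewrite /adjmx map_mxD linearD. Qed.
Lemma adjmxN m n (A : 'M[C]_(m,n)) : adjmx (- A) = - adjmx A.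
Proof. by rewrite /adjmx map_mxN linearN. Qed.
Lemma adjmxB m n (A B : 'M[C]_(m,n)) : adjmx (A - B) = adjmx A - adjmx B.
Proof. by rewrite adjmxD adjmxN. Qed.
Lemma adjmxZ m n a (A : 'M[C]_(m,n)) : adjmx (a *: A) = a^* *: adjmx A.
Proof. by rewrite /adjmx map_mxZ linearZ. Qed.
Lemma adjmxK m n (A : 'M[C]_(m,n)) : adjmx (adjmx A) = A.
Proof. by apply/matrixP => i j; rewrite !mxE conjCK. Qed.
Lemma adjmx0 m n : adjmx (0 : 'M[C]_(m,n)) = 0.
Proof. by apply/matrixP => i j; rewrite !mxE conjC0. Qed.
Lemma adjmx_block m1 m2 n1 n2 (a : 'M[C]_(m1,n1)) (b : 'M[C]_(m1,n2)) (c : 'M[C]_(m2,n1)) (d : 'M[C]_(m2,n2)) :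
  adjmx (block_mx a b c d) = block_mx (adjmx a) (adjmx c) (adjmx b) (adjmx d).
Proof. by rewrite /adjmx map_block_mx tr_block_mx. Qed.
Lemma adjmx_col m1 m2 n (a : 'M[C]_(m1,n)) (b : 'M[C]_(m2,n)) :
  adjmx (col_mx a b) = row_mx (adjmx a) (adjmx b).
Proof. by rewrite /adjmx map_col_mx tr_col_mx. Qed.
Lemma adjmx_row m n1 n2 (a : 'M[C]_(m,n1)) (b : 'M[C]_(m,n2)) :
  adjmx (row_mx a b) = col_mx (adjmx a) (adjmx b).
Proof. by rewrite /adjmx map_row_mx tr_row_mx. Qed.
Lemma normsq0 n (x : 'cV[C]_n) : adjmx x *m x = 0 -> x = 0.
Proof.
move=> /matrixP /(_ 0 0); rewrite !mxE => H.
have H2 : \sum_i `|x i 0| ^+ 2 = 0.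
  rewrite -[RHS]H; apply: eq_bigr => i _.
  by rewrite !mxE normCK mulrC.
apply/matrixP => i j; rewrite (ord1 j) mxE.
have := @psumr_eq0P _ _ xpredT (fun k => `|x k 0| ^+ 2) (fun k _ => exprn_ge0 2 (normr_ge0 (x k 0))) H2 i isT.
by move/eqP; rewrite expf_eq0 /= normr_eq0 => /eqP.
Qed.
Lemma unit_mul0 n (D : 'M[C]_n) (x : 'cV[C]_n) : D \in unitmx -> D *m x = 0 -> x = 0.
Proof. by move=> HD H; rewrite -(mulKmx HD x) H mulmx0. Qed.
Lemma unit_adjmul0 n (D : 'M[C]_n) (x : 'cV[C]_n) : D \in unitmx -> adjmx D *m x = 0 -> x = 0.
Proof.
move=> HD H; have : adjmx x *m D = 0 by rewrite -[D]adjmxK -adjmxM H adjmx0.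
by move=> H2; rewrite -[x]adjmxK -(mulmxK HD (adjmx x)) H2 mul0mx adjmx0.
Qed.
Lemma rank2 n (x y : 'cV[C]_n) :
  (forall a b : C, a *: x + b *: y = 0 -> a = 0 /\ b = 0) -> \rank (row_mx x y) = 2%N.
Proof.
move=> H; apply/eqP; rewrite eqn_leq rank_leq_col /=.
rewrite leqNgt; apply/negP => Hlt.
have : \rank (kermx (row_mx x y)^T) != 0%N.
  by rewrite mxrank_ker mxrank_tr; move: Hlt; case: (\rank _) => [|[|]].
rewrite mxrank_eq0 => /eqP/matrixP Hne; apply: Hne => i j.
set K := kermx _.
have Hy : row i K *m (row_mx x y)^T = 0 by rewrite -row_mul mulmx_ker row0.
rewrite -[row i K]hsubmxK tr_row_mx mul_row_col in Hy.
rewrite [lsubmx _]mx11_scalar [rsubmx _]mx11_scalar !mul_scalar_mx in Hy.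
have /H [Ha Hb] : (lsubmx (row i K)) 0 0 *: x + (rsubmx (row i K)) 0 0 *: y = 0.
  by rewrite -[LHS]trmxK linearD !linearZ /= Hy linear0.
have HK : K i j = row i K 0 j by rewrite [RHS]mxE.
rewrite HK -[row i K]hsubmxK [lsubmx _]mx11_scalar [rsubmx _]mx11_scalar Ha Hb.
by rewrite !raddf0 row_mx0 !mxE.
Qed.
Lemma key n (P1 P2 D : 'M[C]_n) (d g s : C) (v1 v2 u1 u2 : 'cV[C]_n) :
  d != 0 -> 0 < g -> 0 < s -> D \in unitmx -> P1 - P2 = d *: D ->
  block_mx P1 0 (g *: D) P2 *m col_mx v1 v2 = s *: col_mx u1 u2 ->
  adjmx (block_mx P1 0 (g *: D) P2) *m col_mx u1 u2 = s *: col_mx v1 v2 ->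
  adjmx (col_mx u1 u2) *m col_mx u1 u2 = 1 ->
  adjmx (col_mx v1 v2) *m col_mx v1 v2 = 1 ->
  adjmx (row_mx u1 u2) *m row_mx u1 u2 = adjmx (row_mx v1 v2) *m row_mx v1 v2 ->
  \rank (row_mx v1 (v2 - (g / d) *: v1)) = 2%N.
Proof.
move=> Hd Hg Hs HD HPD Hv Hu Hu1 Hv1 Gram.
rewrite mul_block_col !mul0mx addr0 scale_col_mx in Hv.
case/eq_col_mx: Hv => E1 E2.
rewrite adjmx_block adjmx0 mul_block_col mul0mx add0r scale_col_mx in Hu.
case/eq_col_mx: Hu => E3 E4.
rewrite adjmx_col mul_row_col in Hu1.
rewrite adjmx_col mul_row_col in Hv1.
rewrite !adjmx_row !mul_col_row in Gram.
case/eq_block_mx: Gram => G11 G12 G21 G22.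
have gR : g^* = g by apply/conj_Creal/gtr0_real.
have g0 : g != 0 by rewrite gt_eqF.
have Hu0 : ~ (u1 = 0 /\ u2 = 0).
  move=> [h1 h2]; move: Hu1; rewrite h1 h2 !mulmx0 addr0 => /esym/eqP.
  by rewrite oner_eq0.
have Hv10 : v1 != 0.
  apply/eqP => h1. have hu1 : u1 = 0 by apply: normsq0; rewrite G11 h1 mulmx0.
  have hu2 : u2 = 0.
    move: E3; rewrite h1 hu1 mulmx0 scaler0 add0r adjmxZ gR -scalemxAl => /eqP.
    by rewrite scaler_eq0 (negbTE g0) /= => /eqP /(unit_adjmul0 _ _ _ HD).
  by apply: Hu0.
have Key : forall c, v2 = c *: v1 -> False.
  move=> c hv2.
  have hu2 : u2 = c *: u1.
    apply/eqP; rewrite -subr_eq0; apply/eqP; apply: normsq0.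
    rewrite adjmxB adjmxZ !(mulmxBl, mulmxBr) -!scalemxAl -!scalemxAr G22 G21 G12 G11 hv2 adjmxZ -!scalemxAl -!scalemxAr !scalerA.
    by rewrite [c * _]mulrC !subrr.
  have Dv1 : D *m v1 != 0 by apply/eqP => /(unit_mul0 _ _ _ HD); apply/eqP.
  have gc : g = c * d.
    have : (g - c * d) *: (D *m v1) = 0.
      rewrite scalerBl -scalerA [d *: _]scalemxAl -HPD mulmxBl scalerBr E1.
      move: E2; rewrite hv2 hu2 -scalemxAr scalerA [s * c]mulrC -scalerA => E2r; rewrite -E2r.
      by rewrite addrK scalemxAl subrr.
    by move/eqP; rewrite scaler_eq0 (negbTE Dv1) orbF subr_eq0 => /eqP.
  have c0 : c != 0 by apply/eqP => c0'; move: g0; rewrite gc c0' mul0r eqxx.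
  have E4' : adjmx P2 *m u1 = s *: v1.
    move: E4; rewrite hu2 hv2 -scalemxAr scalerA [s * c]mulrC -scalerA => /eqP.
    by rewrite -subr_eq0 -scalerBr scaler_eq0 (negbTE c0) /= subr_eq0 => /eqP.
  have u10 : u1 != 0 by apply/eqP=> h; apply: Hu0; rewrite hu2 h scaler0.
  have Du1 : adjmx D *m u1 != 0 by apply/eqP => /(unit_adjmul0 _ _ _ HD); apply/eqP.
  have H3 : (d^* + g * c) *: (adjmx D *m u1) = 0.
    rewrite scalerDl scalemxAl -adjmxZ -HPD adjmxB mulmxBl E4' -E3 hu2 adjmxZ gR.
    by rewrite -scalemxAl -scalemxAr scalerA opprD addrA subrr sub0r addNr.
  move/eqP: H3; rewrite scaler_eq0 (negbTE Du1) orbF => /eqP H3.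
  have : d * d^* + g ^+ 2 = 0.
    by rewrite expr2 {2}gc mulrA [d * d^*]mulrC -mulrDl H3 mul0r.
  apply/eqP; rewrite -normCK lt0r_neq0 // ltr_wpDl ?exprn_ge0 ?normr_ge0 //.
  by rewrite exprn_gt0.
apply: rank2 => a b H.
case: (eqVneq b 0) => [b0|b0].
  move: H; rewrite b0 scale0r addr0 => /eqP.
  by rewrite scaler_eq0 (negbTE Hv10) orbF => /eqP.
exfalso; apply: (Key (g / d - a / b)).
apply: (scalerI b0); rewrite scalerA mulrBr [b * (a / b)]mulrCA divff // mulr1 scalerBl.
move/eqP: H; rewrite scalerBr scalerA addrC addr_eq0 subr_eq => /eqP ->.
by rewrite addrC.
Qed.
End A.

Local Open Scope complex_scope.

Theorem corollary2 (R : realType) (n m : nat) (A : 'I_m.+1 -> 'M[R[i]]_n)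
  (mu1 mu2 : R[i]) (gs ss : R[i]) (u v : 'cV[R[i]]_(n + n)) :
  \det (A ord_max) != 0 ->
  mu1 != mu2 ->
  (* gamma_* >= 0 is a maximizer of s_{2n-1}(F(gamma)) over gamma >= 0,
     with maximum value s_* > 0 *)
  0 <= gs ->
  is_sv (Fmat A mu1 mu2 gs) (2 * n).-1 ss ->
  (forall g s, 0 <= g -> is_sv (Fmat A mu1 mu2 g) (2 * n).-1 s -> s <= ss) ->
  0 < ss ->
  (* u, v : unit left/right singular vectors for s_* *)
  Fmat A mu1 mu2 gs *m v = ss *: u ->
  adjmx (Fmat A mu1 mu2 gs) *m u = ss *: v ->
  adjmx u *m u = 1 ->
  adjmx v *m v = 1 ->
  (* normalization conditions *)
  adjmx (dsubmx u) *m mxpoly_dd A mu1 mu2 *m usubmx v = 0 ->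
  adjmx (dsubmx u) *m usubmx u = adjmx (dsubmx v) *m usubmx v ->
  adjmx (row_mx (usubmx u) (dsubmx u)) *m row_mx (usubmx u) (dsubmx u)
    = adjmx (row_mx (usubmx v) (dsubmx v)) *m row_mx (usubmx v) (dsubmx v) ->
  (* hypotheses of the corollary *)
  0 < gs ->
  mxpoly_dd A mu1 mu2 \in unitmx ->
  \rank (row_mx (usubmx v)
           (dsubmx v - (gs / (mu1 - mu2)) *: usubmx v)) = 2%N.
Proof.
move=> _ Hmu _ _ _ Hs Hv Hu Hu1 Hv1 _ _ Gram Hg HD.
have := @key _ n (mxpoly_eval A mu1) (mxpoly_eval A mu2) (mxpoly_dd A mu1 mu2)
  (mu1 - mu2) gs ss (usubmx v) (dsubmx v) (usubmx u) (dsubmx u).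
rewrite !vsubmxK; apply => //.
- by rewrite subr_eq0.
- by rewrite /mxpoly_dd scalerA divff ?scale1r // subr_eq0.
Qed.
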